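(* Let $X$ be a K3 quartic surface, let $l\subset X$ be a line of singularity $0$, and suppose $l$ has a twin $l^*$. If $\Pi\supset l$ is a $p$-fiber of $l$, then $\Pi$ corresponds to a branch point of $\pi|_{\hat l}:\hat l\to\mathbb P^1$ (i.e. the fiber of $\pi$ corresponding to $\Pi$ is ramified for $\pi|_{\hat l}$).
   Context: $k$ is algebraically closed of characteristic $\neq 2,3$. A K3 quartic surface is a surface $X \subset \mathbb P^3_k$ of degree 4 whose only singularities are isolated rational double points; $\varphi:Z\to X$ is its minimal desingularization, $\hat C$ the strict transform. For a line $l\subset X$, the planes $\Pi_t\supset l$ cut residual cubics $E_t$ ($\Pi_t\cap X=l+E_t$) and induce an elliptic fibration $\pi:Z\to\mathbb P^1$. A line has singularity 0 if it contains no singular point of $X$ (then $\pi|_{\hat l}$ has degree 3). A plane $\Pi_t\supset l$ is a $p$-fiber of $l$ if $E_t$ splits into three (not necessarily distinct) lines. Two disjoint lines $l, l^*\subset X$ of singularity 0 are twin lines if there are exactly 10 lines on $X$ meeting both; equivalently, $X$ is projectively equivalent to a quartic $x_0 p_0(x_2,x_3)+x_1p_1(x_2,x_3)+x_2p_2(x_0,x_1)+x_3p_3(x_0,x_1)=0$ ($p_i$ binary cubic forms) with $l=\{x_0=x_1=0\}$, $l^*=\{x_2=x_3=0\}$. *)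

(* Defs.v *)
From HB Require Import structures.
From mathcomp Require Import all_boot all_order all_algebra.
Set Implicit Arguments. Unset Strict Implicit. Unset Printing Implicit Defensive.
Import Order.TTheory GRing.Theory Num.Theory.
Local Open Scope ring_scope.

(* Binary cubic forms  p(x,y) = c0 x^3 + c1 x^2 y + c2 x y^2 + c3 y^3.      *)
Record bcubic (K : Type) := BCubic { bc0 : K; bc1 : K; bc2 : K; bc3 : K }.

(* evaluation of a binary cubic with coefficients in K inside any commutative
   ring R receiving K via f (used with R = K, f = id, and R = {poly K},
   f = polyC to compute differentials) *)
Definition bcE (K : Type) (R : comNzRingType) (f : K -> R) (p : bcubic K)
  (x y : R) : R :=
  f (bc0 p) * x ^+ 3 + f (bc1 p) * x ^+ 2 * y + f (bc2 p) * x * y ^+ 2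
  + f (bc3 p) * y ^+ 3.

(* A quartic in twin-line normal form
     x0 p0(x2,x3) + x1 p1(x2,x3) + x2 p2(x0,x1) + x3 p3(x0,x1) = 0,
   with l = {x0 = x1 = 0}, l* = {x2 = x3 = 0}. *)
Record twinq (K : Type) := TwinQ
  { tq0 : bcubic K; tq1 : bcubic K; tq2 : bcubic K; tq3 : bcubic K }.

Definition twinF (K : Type) (R : comNzRingType) (f : K -> R) (Q : twinq K)
  (x0 x1 x2 x3 : R) : R :=
  x0 * bcE f (tq0 Q) x2 x3 + x1 * bcE f (tq1 Q) x2 x3
  + x2 * bcE f (tq2 Q) x0 x1 + x3 * bcE f (tq3 Q) x0 x1.

Definition F (K : fieldType) (Q : twinq K) (x0 x1 x2 x3 : K) : K :=
  twinF id Q x0 x1 x2 x3.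

Definition Fline (K : fieldType) (Q : twinq K) (v0 v1 v2 v3 w0 w1 w2 w3 : K)
  : {poly K} :=
  twinF (@polyC K) Q (v0%:P + w0 *: 'X) (v1%:P + w1 *: 'X)
                     (v2%:P + w2 *: 'X) (v3%:P + w3 *: 'X).

(* (v0:v1:v2:v3) is a singular point of X = {F = 0}: v <> 0, F(v) = 0 and the
   differential of F at v vanishes (the linear term of F(v + e w) is zero for
   every direction w). *)
Definition singular_pt (K : fieldType) (Q : twinq K) (v0 v1 v2 v3 : K) : Prop :=
  [/\ ~ [/\ v0 = 0, v1 = 0, v2 = 0 & v3 = 0],
      F Q v0 v1 v2 v3 = 0 &
      forall w0 w1 w2 w3 : K, (Fline Q v0 v1 v2 v3 w0 w1 w2 w3)`_1 = 0].

Definition l_sing0 (K : fieldType) (Q : twinq K) : Prop :=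
  forall a b : K, ~ singular_pt Q 0 0 a b.

Definition lstar_sing0 (K : fieldType) (Q : twinq K) : Prop :=
  forall a b : K, ~ singular_pt Q a b 0 0.

(* The plane Pi_[s:t] = {t x0 - s x1 = 0} containing l, parametrised linearly
   by (u, x2, x3) |-> (s u, t u, x2, x3); in these plane coordinates the
   equation of l is u. *)

Definition lin3 (K : fieldType) (a b c u x2 x3 : K) : K := a * u + b * x2 + c * x3.

(* Pi_[s:t] is a p-fiber of l: Pi ∩ X = l + E with E = three (not necessarily
   distinct) lines, i.e. F restricted to Pi equals u times a product of three
   nonzero linear forms (identity of polynomial functions on K^3, which for the
   infinite field K is the identity of ternary quartic forms). *)
Definition p_fiber (K : fieldType) (Q : twinq K) (s t : K) : Prop :=
  exists a1 b1 c1 a2 b2 c2 a3 b3 c3 : K,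
    [/\ ~ [/\ a1 = 0, b1 = 0 & c1 = 0],
        ~ [/\ a2 = 0, b2 = 0 & c2 = 0],
        ~ [/\ a3 = 0, b3 = 0 & c3 = 0] &
    forall u x2 x3 : K,
      F Q (s * u) (t * u) x2 x3
      = u * (lin3 a1 b1 c1 u x2 x3 * lin3 a2 b2 c2 u x2 x3
             * lin3 a3 b3 c3 u x2 x3)].

(* Indeed
     F(s u, t u, x2, x3) = u * ( s p0(x2,x3) + t p1(x2,x3)
                                 + u^2 (x2 p2(s,t) + x3 p3(s,t)) ),
   so E_[s:t] ∩ l = {s p0(x2,x3) + t p1(x2,x3) = 0}; this binary cubic is the
   fiber of pi|_l : l -> P^1 over [s:t] (l ≅ \hat l as l has singularity 0). *)
Definition fiber_form (K : fieldType) (R : comNzRingType) (f : K -> R)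
  (Q : twinq K) (s t : K) (x2 x3 : R) : R :=
  f s * bcE f (tq0 Q) x2 x3 + f t * bcE f (tq1 Q) x2 x3.

(* [s:t] is a branch point of pi|_l: the fiber divisor over [s:t] has a
   multiple point [a:b] of l, i.e. the binary cubic fiber_form vanishes at
   (a,b) together with its differential (a ramification point of pi|_l). *)
Definition branch_point (K : fieldType) (Q : twinq K) (s t : K) : Prop :=
  exists a b : K,
    [/\ ~ (a = 0 /\ b = 0),
        fiber_form id Q s t a b = 0 &
        forall c d : K,
          (fiber_form (@polyC K) Q s t (a%:P + c *: 'X) (b%:P + d *: 'X))`_1 = 0].

(* Main.v *)
Require Import Defs.
From HB Require Import structures.
From mathcomp Require Import all_boot all_order all_algebra.
From mathcomp Require Import ring.
Import GRing.Theory.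
Local Open Scope ring_scope.

Section Aux.
Variable K : fieldType.
Hypothesis hchar2 : (2%:R : K) != 0.
Hypothesis hchar3 : (3%:R : K) != 0.

Lemma coef1E (p : {poly K}) : p`_1 = (p^`()).[0].
Proof. by rewrite horner_coef0 coef_deriv mulr1n. Qed.

Definition cub (g0 g1 g2 g3 x y : K) :=
  g0*x^+3 + g1*x^+2*y + g2*x*y^+2 + g3*y^+3.

Definition D1 (g0 g1 g2 g3 a b c d : K) :=
  g0 * (3%:R * a^+2 * c) + g1 * (2%:R*a*b*c + a^+2*d)
  + g2 * (b^+2*c + 2%:R*a*b*d) + g3 * (3%:R*b^+2*d).

Definition D2 (g0 g1 g2 g3 a b c d : K) :=
  g0 * (3%:R * a * c^+2) + g1 * (2%:R*a*c*d + b*c^+2)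
  + g2 * (2%:R*b*c*d + a*d^+2) + g3 * (3%:R*b*d^+2).

Lemma cub_line g0 g1 g2 g3 a b c d e :
  cub g0 g1 g2 g3 (a + e*c) (b + e*d) =
  cub g0 g1 g2 g3 a b + D1 g0 g1 g2 g3 a b c d * e
  + D2 g0 g1 g2 g3 a b c d * e^+2 + cub g0 g1 g2 g3 c d * e^+3.
Proof. rewrite /cub /D1 /D2; ring. Qed.

Lemma cubic4 c0 c1 c2 c3 :
  (forall u : K, u != 0 -> c0 + c1*u + c2*u^+2 + c3*u^+3 = 0) ->
  [/\ c0 = 0, c1 = 0, c2 = 0 & c3 = 0].
Proof.
move=> h.
pose f u := c0 + c1*u + c2*u^+2 + c3*u^+3.
have n1 : (-1 : K) != 0 by rewrite oppr_eq0 oner_eq0.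
have n2 : (- 2%:R : K) != 0 by rewrite oppr_eq0.
have P1 : f 1 = 0 := h 1 (oner_neq0 _).
have Pm1 : f (-1) = 0 := h _ n1.
have P2 : f 2%:R = 0 := h _ hchar2.
have Pm2 : f (- 2%:R) = 0 := h _ n2.
have h6 : (6%:R : K) != 0.
  by rewrite (_ : 6%:R = 2%:R * 3%:R) ?mulf_neq0 // -natrM.
have h12 : (12%:R : K) != 0.
  by rewrite (_ : 12%:R = 2%:R * 6%:R) ?mulf_neq0 // -natrM.
have e2 : 6%:R * c2 = f 2%:R + f (- 2%:R) - (f 1 + f (-1)) by rewrite /f; ring.
have e3 : 12%:R * c3 = f 2%:R - f (- 2%:R) - 2%:R * (f 1 - f (-1)) by rewrite /f; ring.
rewrite P1 Pm1 P2 Pm2 !(addr0, subr0, mulr0) in e2 e3.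
have z2 : c2 = 0 by move/eqP: e2; rewrite mulf_eq0 (negPf h6) => /eqP.
have z3 : c3 = 0 by move/eqP: e3; rewrite mulf_eq0 (negPf h12) => /eqP.
have e0 : 2%:R * c0 = f 1 + f (-1) - 2%:R * c2 by rewrite /f; ring.
have e1 : 2%:R * c1 = f 1 - f (-1) - 2%:R * c3 by rewrite /f; ring.
rewrite P1 Pm1 z2 z3 !(addr0, subr0, mulr0) in e0 e1.
split=> //.
  by move/eqP: e0; rewrite mulf_eq0 (negPf hchar2) => /eqP.
by move/eqP: e1; rewrite mulf_eq0 (negPf hchar2) => /eqP.
Qed.

Lemma lin_prod0 b3 c3 B C :
  ~ (b3 = 0 /\ c3 = 0) ->
  (forall x y : K, (b3*x + c3*y) * (B*x + C*y) = 0) -> B = 0 /\ C = 0.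
Proof.
move=> nz h.
have h10 := h 1 0; have h01 := h 0 1; have h11 := h 1 1.
rewrite !(mulr1, mulr0, addr0, add0r) in h10 h01 h11.
have [b0|b0] := eqVneq b3 0.
  have c0 : c3 != 0 by apply/eqP => c0; apply: nz.
  rewrite b0 add0r in h11.
  move/eqP: h01; rewrite mulf_eq0 (negPf c0) /= => /eqP C0.
  move/eqP: h11; rewrite C0 addr0 mulf_eq0 (negPf c0) /= => /eqP B0.
  by [].
move/eqP: h10; rewrite mulf_eq0 (negPf b0) /= => /eqP B0.
rewrite B0 add0r in h11.
have e : b3 * C = (b3 + c3) * C - c3 * C by ring.
have : b3 * C = 0 by rewrite e h11 h01 subrr.
by move/eqP; rewrite mulf_eq0 (negPf b0) /= => /eqP.
Qed.

Lemma key (g : K -> K -> K) a1 a2 b1 c1 b2 c2 b3 c3 :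
  (forall x y, g x y = (b1*x+c1*y)*(b2*x+c2*y)*(b3*x+c3*y)) ->
  (forall x y, a1*((b2*x+c2*y)*(b3*x+c3*y)) + a2*((b1*x+c1*y)*(b3*x+c3*y)) = 0) ->
  (exists x y, a1*a2*(b3*x+c3*y) != 0) ->
  exists k a b B C B' C', [/\ ~ (a = 0 /\ b = 0), B*a + C*b = 0 &
     forall x y, g x y = k*(B*x+C*y)^+2*(B'*x+C'*y)].
Proof.
move=> hG h1 [x0 [y0 hH]].
have a1n : a1 != 0 by apply: contraNneq hH => ->; rewrite !mul0r.
have a2n : a2 != 0 by apply: contraNneq hH => ->; rewrite mulr0 mul0r.
have l3n : ~ (b3 = 0 /\ c3 = 0) by move=> [b0 c0]; move: hH; rewrite b0 c0; rewrite !mul0r addr0 mulr0 eqxx.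
have [B0 C0] : a1*b2 + a2*b1 = 0 /\ a1*c2+a2*c1 = 0.
  apply: (@lin_prod0 b3 c3 (a1*b2 + a2*b1) (a1*c2+a2*c1) l3n) => x y.
  rewrite -(h1 x y); ring.
have eb : b2 = - (a2*b1) / a1.
  have -> : a2*b1 = - (a1*b2) by rewrite -[RHS]add0r -B0; ring.
  by field.
have ec : c2 = - (a2*c1) / a1.
  have -> : a2*c1 = - (a1*c2) by rewrite -[RHS]add0r -C0; ring.
  by field.
exists (- a2 / a1).
have hg : forall x y, g x y = - a2 / a1 * (b1*x+c1*y)^+2 * (b3*x+c3*y).
  by move=> x y; rewrite hG eb ec; field.
case: (boolP ((b1 == 0) && (c1 == 0))) => [/andP [/eqP b10 /eqP c10]|nz].
  exists 1, 0, b1, c1, b3, c3; split => //.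
    by case=> /eqP; rewrite oner_eq0.
  by rewrite b10 c10; ring.
exists c1, (- b1), b1, c1, b3, c3; split => //.
  by case=> /eqP c0 /eqP; rewrite oppr_eq0 => b0; move: nz; rewrite b0 c0.
ring.
Qed.
End Aux.
Arguments cub {K}.
Arguments D1 {K}.
Arguments D2 {K}.
Arguments key {K}.
Arguments coef1E {K}.
Arguments cubic4 {K}.

Lemma Fsplit (K : fieldType) (Q : twinq K) s t u x y :
  F Q (s*u) (t*u) x y = u * (fiber_form id Q s t x y
     + u^+2 * (x * bcE id (tq2 Q) s t + y * bcE id (tq3 Q) s t)).
Proof. rewrite /F /twinF /fiber_form /bcE /=; ring. Qed.

Lemma ffid (K : fieldType) (Q : twinq K) s t x y :
  fiber_form id Q s t x y =
  cub (s * bc0 (tq0 Q) + t * bc0 (tq1 Q)) (s * bc1 (tq0 Q) + t * bc1 (tq1 Q))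
      (s * bc2 (tq0 Q) + t * bc2 (tq1 Q)) (s * bc3 (tq0 Q) + t * bc3 (tq1 Q)) x y.
Proof. rewrite /fiber_form /bcE /cub /=; ring. Qed.

Lemma ffpoly (K : fieldType) (Q : twinq K) s t a b c d :
  (fiber_form (@polyC K) Q s t (a%:P + c *: 'X) (b%:P + d *: 'X))`_1 =
  D1 (s * bc0 (tq0 Q) + t * bc0 (tq1 Q)) (s * bc1 (tq0 Q) + t * bc1 (tq1 Q))
      (s * bc2 (tq0 Q) + t * bc2 (tq1 Q)) (s * bc3 (tq0 Q) + t * bc3 (tq1 Q)) a b c d.
Proof.
rewrite coef1E /fiber_form /bcE /D1 !derivCE /= !hornerE /=.
ring.
Qed.

Lemma lstar_sing (K : fieldType) (Q : twinq K) s t :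
  ~ (s = 0 /\ t = 0) -> bcE id (tq2 Q) s t = 0 -> bcE id (tq3 Q) s t = 0 ->
  singular_pt Q s t 0 0.
Proof.
move=> hst h2 h3; split.
- by case=> s0 t0 _ _; apply: hst.
- rewrite /F /twinF /bcE /=; ring.
move=> w0 w1 w2 w3.
transitivity (w2 * bcE id (tq2 Q) s t + w3 * bcE id (tq3 Q) s t).
  rewrite coef1E /Fline /twinF /bcE !derivCE /= !hornerE /=; ring.
by rewrite h2 h3; ring.
Qed.

Theorem corollary3p6 (K : closedFieldType)
  (hchar2 : (2%:R : K) != 0) (hchar3 : (3%:R : K) != 0)
  (Q : twinq K)
  (hl : l_sing0 Q) (hlstar : lstar_sing0 Q)
  (s t : K) (hst : ~ (s = 0 /\ t = 0))
  (hp : p_fiber Q s t) :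
  branch_point Q s t.
Proof.
case: hp => [a1 [b1 [c1 [a2 [b2 [c2 [a3 [b3 [c3 [n1 n2 n3 hF]]]]]]]]]].
set P2 := bcE id (tq2 Q) s t; set P3 := bcE id (tq3 Q) s t.
set G := fun x y => fiber_form id Q s t x y.
have Hne : exists x y, x * P2 + y * P3 != 0.
  have [z2|nz2] := eqVneq P2 0; last by exists 1, 0; rewrite mul1r mul0r addr0.
  have [z3|nz3] := eqVneq P3 0; last by exists 0, 1; rewrite mul1r mul0r add0r.
  by case: (hlstar s t); apply: lstar_sing.
have hc : forall x y,
  [/\ (b1*x+c1*y)*(b2*x+c2*y)*(b3*x+c3*y) - G x y = 0,
      a1*((b2*x+c2*y)*(b3*x+c3*y)) + a2*((b1*x+c1*y)*(b3*x+c3*y))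
        + a3*((b1*x+c1*y)*(b2*x+c2*y)) = 0,
      a1*a2*(b3*x+c3*y) + a1*a3*(b2*x+c2*y) + a2*a3*(b1*x+c1*y)
        - (x * P2 + y * P3) = 0 &
      a1*a2*a3 = 0].
  move=> x y; apply: (cubic4 hchar2 hchar3) => u un.
  have e := hF u x y; rewrite Fsplit in e.
  have e' := mulfI un e.
  rewrite /lin3 in e'.
  transitivity ((a1 * u + b1 * x + c1 * y) * (a2 * u + b2 * x + c2 * y) *
     (a3 * u + b3 * x + c3 * y) - (fiber_form id Q s t x y +
     u ^+ 2 * (x * bcE id (tq2 Q) s t + y * bcE id (tq3 Q) s t))).
    rewrite /G /P2 /P3; ring.
  by rewrite e' subrr.
have hG x y : G x y = (b1*x+c1*y)*(b2*x+c2*y)*(b3*x+c3*y).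
  by case: (hc x y) => /eqP; rewrite subr_eq0 => /eqP ->.
have h1 x y := let: And4 _ h _ _ := hc x y in h.
have hH x y : x * P2 + y * P3 =
   a1*a2*(b3*x+c3*y) + a1*a3*(b2*x+c2*y) + a2*a3*(b1*x+c1*y).
  by case: (hc x y) => _ _ /eqP; rewrite subr_eq0 => /eqP ->.
have h3 : a1*a2*a3 = 0 by case: (hc 0 0).
have [k [a [b [B [C [B' [C' [nab hab hk]]]]]]]] :
  exists k a b B C B' C', [/\ ~ (a = 0 /\ b = 0), B*a + C*b = 0 &
     forall x y, G x y = k*(B*x+C*y)^+2*(B'*x+C'*y)].
  case: Hne => x0 [y0 hne].
  move/eqP: h3; rewrite !mulf_eq0 => /orP [/orP [] /eqP z | /eqP z].
  - apply: (key G a2 a3 b2 c2 b3 c3 b1 c1).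
    + by move=> x y; rewrite hG; ring.
    + by move=> x y; rewrite -(h1 x y) z; ring.
    + exists x0, y0; move: hne; rewrite hH z; by rewrite !(mul0r, add0r).
  - apply: (key G a1 a3 b1 c1 b3 c3 b2 c2).
    + by move=> x y; rewrite hG; ring.
    + by move=> x y; rewrite -(h1 x y) z; ring.
    + exists x0, y0; move: hne; rewrite hH z; by rewrite !(mul0r, mulr0, add0r, addr0).
  - apply: (key G a1 a2 b1 c1 b2 c2 b3 c3).
    + by move=> x y; rewrite hG; ring.
    + by move=> x y; rewrite -(h1 x y) z; ring.
    + exists x0, y0; move: hne; rewrite hH z; by rewrite !(mul0r, mulr0, add0r, addr0).
have hG0 : fiber_form id Q s t a b = 0.
  by have := hk a b; rewrite /G => ->; rewrite hab; ring.
exists a, b; split => // c d.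
rewrite ffpoly.
set g0 := s * bc0 (tq0 Q) + t * bc0 (tq1 Q).
set g1 := s * bc1 (tq0 Q) + t * bc1 (tq1 Q).
set g2 := s * bc2 (tq0 Q) + t * bc2 (tq1 Q).
set g3 := s * bc3 (tq0 Q) + t * bc3 (tq1 Q).
set q0 := cub g0 g1 g2 g3 a b.
set q1 := D1 g0 g1 g2 g3 a b c d.
set q2 := D2 g0 g1 g2 g3 a b c d - k * (B*c+C*d)^+2 * (B'*a+C'*b).
set q3 := cub g0 g1 g2 g3 c d - k * (B*c+C*d)^+2 * (B'*c+C'*d).
suff /(@cubic4 K hchar2 hchar3) [_ -> //] :
  forall e : K, e != 0 -> q0 + q1 * e + q2 * e^+2 + q3 * e^+3 = 0.
move=> e _.
transitivity (cub g0 g1 g2 g3 (a + e * c) (b + e * d)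
   - k * (B * (a + e*c) + C * (b + e*d))^+2 * (B' * (a + e*c) + C' * (b + e*d))).
  have -> : B * (a + e*c) + C * (b + e*d) = e * (B*c + C*d).
    by rewrite -[RHS]add0r -hab; ring.
  rewrite /q0 /q1 /q2 /q3 cub_line; ring.
by rewrite -ffid -/(G _ _) hk subrr.
Qed.
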